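(* Let $E_n$ be an $n$-dimensional Euclidean space with inner product $(\cdot,\cdot)$. Let $\Sigma_1,\Sigma_2\subseteq E_n$ be subspaces with bases $\mathbf a_1,\dots,\mathbf a_p$ and $\mathbf b_1,\dots,\mathbf b_q$ respectively, where $p\le q\le n$. If $p<q$, assume in addition that $\mathbf b_1,\dots,\mathbf b_q$ is an orthonormal basis. Let $M$ be the $p\times q$ matrix with entries $M_{ij}=(\mathbf a_i,\mathbf b_j)$, and let $\Gamma_1=\det[(\mathbf a_i,\mathbf a_k)]_{i,k=1}^p$ and $\Gamma_2=\det[(\mathbf b_j,\mathbf b_l)]_{j,l=1}^q$ be the Gram determinants. Then $$\det(MM^T)\le \Gamma_1\,\Gamma_2,$$ and equality holds if and only if $\Sigma_1\subseteq\Sigma_2$. *)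

(* Defs.v *)
(* E_n is modelled as row vectors 'rV[R]_n over a real field R
   with the standard inner product (every n-dim Euclidean space is isometric
   to this one). A family of p vectors is a p x n matrix whose rows are the
   vectors. *)
From HB Require Import structures.
From mathcomp Require Import all_boot all_order all_algebra.
Set Implicit Arguments. Unset Strict Implicit. Unset Printing Implicit Defensive.
Import Order.TTheory GRing.Theory Num.Theory.
Local Open Scope ring_scope.

Definition inner (R : ringType) (n : nat) (u v : 'rV[R]_n) : R :=
  (u *m v^T) 0 0.

Definition inner_mx (R : ringType) (n p q : nat)
  (X : 'M[R]_(p, n)) (Y : 'M[R]_(q, n)) : 'M[R]_(p, q) :=
  \matrix_(i < p, j < q) inner (row i X) (row j Y).

Definition gram_det (R : comRingType) (n p : nat) (X : 'M[R]_(p, n)) : R :=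
  \det (inner_mx X X).

(* Main.v *)
Require Import Defs.
From HB Require Import structures.
From mathcomp Require Import all_boot all_order all_algebra ring.
Set Implicit Arguments. Unset Strict Implicit. Unset Printing Implicit Defensive.
Import Order.TTheory GRing.Theory Num.Theory.
Local Open Scope ring_scope.

Section S.
Variable R : realFieldType.

Lemma inner_mxE n p q (X : 'M[R]_(p, n)) (Y : 'M[R]_(q, n)) :
  inner_mx X Y = X *m Y^T.
Proof.
apply/matrixP => i j; rewrite !mxE /inner !mxE; apply: eq_bigr => k _.
by rewrite !mxE.
Qed.

Lemma gram_diag p n (X : 'M[R]_(p, n)) i :
  (X *m X^T) i i = \sum_k X i k ^+ 2.
Proof. by rewrite mxE; apply: eq_bigr => k _; rewrite mxE expr2. Qed.

Lemma gram_ge0 p n (X : 'M[R]_(p, n)) i : 0 <= (X *m X^T) i i.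
Proof. by rewrite gram_diag sumr_ge0 // => k _; rewrite sqr_ge0. Qed.

Lemma gram_eq0 p n (X : 'M[R]_(p, n)) i : (X *m X^T) i i = 0 -> row i X = 0.
Proof.
rewrite gram_diag => /psumr_eq0P H; apply/rowP => k; rewrite !mxE.
by apply/eqP; rewrite -sqrf_eq0; apply/eqP; apply: H => // j _; rewrite sqr_ge0.
Qed.

Lemma GS p n (X : 'M[R]_(p, n)) : exists G : 'M[R]_p, exists d : 'rV[R]_p,
  [/\ \det G = 1, (G *m X) *m (G *m X)^T = diag_mx d
    & forall i, d 0 i <= (X *m X^T) i i].
Proof.
elim: p X => [|p IH] X.
  exists 1%:M, 0; split; first by rewrite det1.
    by apply/matrixP => [[]].
  by case.
have -> : X = col_mx (usubmx (X : 'M_(1 + p, n))) (dsubmx (X : 'M_(1 + p, n))).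
  by rewrite vsubmxK.
move: (usubmx _) (dsubmx _) => x X'.
have [G' [d' [dG' hZ' hd']]] := IH X'.
set Z' := G' *m X' in hZ'.
pose c : 'rV[R]_p := \row_k ((x *m Z'^T) 0 k / d' 0 k).
pose z := x - c *m Z'.
have hz : z *m Z'^T = 0.
  rewrite /z mulmxBl -mulmxA hZ' mul_mx_diag; apply/rowP => k.
  rewrite !mxE; set a := \sum_j _.
  have [d0|dn0] := eqVneq (d' 0 k) 0.
    have : (Z' *m Z'^T) k k = 0 by rewrite hZ' mxE eqxx mulr1n d0.
    move/gram_eq0 => Zk0.
    have -> : a = 0.
      rewrite /a big1 // => j _; rewrite mxE.
      by have := congr1 (fun M : 'rV_n => M 0 j) Zk0; rewrite !mxE => ->; rewrite mulr0.
    by rewrite d0 mulr0 subr0.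
  by rewrite divfK // subrr.
have hzt : Z' *m z^T = 0 by rewrite -(trmxK Z') -trmx_mul hz trmx0.
pose w := c *m Z'.
have hx : (x *m x^T) 0 0 = (z *m z^T) 0 0 + (w *m w^T) 0 0.
  have -> : x = z + w by rewrite /z /w subrK.
  rewrite linearD /= mulmxDl !mulmxDr.
  have -> : z *m w^T = 0 by rewrite /w trmx_mul mulmxA hz mul0mx.
  have -> : w *m z^T = 0 by rewrite /w -mulmxA hzt mulmx0.
  by rewrite addr0 add0r mxE.
rewrite -[p.+1]/(1 + p)%N.
exists (block_mx 1%:M (- (c *m G')) 0 G'), (row_mx (z *m z^T) d'); split.
- by rewrite det_ublock det1 dG' mul1r.
- rewrite mul_block_col mul1mx mul0mx add0r mulNmx -mulmxA.
  rewrite -/Z' -/(c *m Z') -/z tr_col_mx mul_col_row hz hzt hZ' diag_mx_row.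
  congr block_mx; apply/matrixP => i j; rewrite !ord1 !mxE eqxx mulr1n //.
- move=> i; rewrite tr_col_mx mul_col_row.
  case: (split_ordP i) => j ->.
    rewrite row_mxEl block_mxEul !ord1 hx lerDl.
    exact: gram_ge0.
  by rewrite row_mxEr block_mxEdr.
Qed.


Lemma mxB_ij m n (A B : 'M[R]_(m, n)) i j : (A - B) i j = A i j - B i j.
Proof. by rewrite !mxE. Qed.

Lemma prod_eq p (e d : 'I_p -> R) : (forall i, 0 <= e i <= d i) ->
  (forall i, 0 < d i) -> \prod_i e i = \prod_i d i -> forall i, e i = d i.
Proof.
move=> h hd heq i; apply/eqP; rewrite eq_le (andP (h i)).2 /=.
rewrite leNgt; apply/negP => lt.
move: heq; rewrite (bigD1 i) //= [in RHS](bigD1 i) //= => heq.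
have h1 : e i * \prod_(j | j != i) e j <= e i * \prod_(j | j != i) d j.
  apply: ler_wpM2l; first by case/andP: (h i).
  by apply: ler_prod => j _; apply: h.
have h2 : e i * \prod_(j | j != i) d j < d i * \prod_(j | j != i) d j.
  by rewrite ltr_pM2r // prodr_gt0.
by have := le_lt_trans h1 h2; rewrite heq ltxx.
Qed.

Lemma unit_of_det1 p (G : 'M[R]_p) : \det G = 1 -> G \in unitmx.
Proof. by move=> h; rewrite unitmxE h unitr1. Qed.

Lemma free_diag_pos p n (Y : 'M[R]_(p, n)) i : row_free Y -> 0 < (Y *m Y^T) i i.
Proof.
move=> hY; rewrite lt_def gram_ge0 andbT; apply/eqP => /gram_eq0.
rewrite rowE => /eqP; rewrite mulmx_free_eq0 // => /eqP/matrixP/(_ 0 i).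
by rewrite !mxE !eqxx /= => /eqP; rewrite oner_eq0.
Qed.

Lemma det_conj p n (G : 'M[R]_p) (A : 'M[R]_(p, n)) (Q : 'M[R]_n) :
  \det G = 1 -> \det (G *m A *m Q *m (G *m A)^T) = \det (A *m Q *m A^T).
Proof.
move=> dG; rewrite trmx_mul !mulmxA det_mulmx det_tr dG mulr1 -!mulmxA det_mulmx dG mul1r.
by rewrite !mulmxA.
Qed.

Lemma det_proj p n (A : 'M[R]_(p, n)) (P : 'M[R]_n) :
  P^T = P -> P *m P = P -> row_free A ->
  \det (A *m P *m A^T) <= \det (A *m A^T) /\
  (\det (A *m P *m A^T) = \det (A *m A^T) <-> A *m P = A).
Proof.
move=> hPt hPP hA.
have [G [d [dG hY hd]]] := GS A.
set Y := G *m A in hY.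
have Gu := unit_of_det1 dG.
have hYf : row_free Y by rewrite /row_free mxrankMfree // -/(row_free G) row_free_unit.
have dpos : forall i, 0 < d 0 i.
  by move=> i; have := free_diag_pos i hYf; rewrite hY mxE eqxx mulr1n.
have detAA : \det (A *m A^T) = \prod_i d 0 i.
  by rewrite -det_diag -hY /Y; have := det_conj A 1%:M dG; rewrite !mulmx1 => ->.
have detAP : \det (A *m P *m A^T) = \det (Y *m P *m (Y *m P)^T).
  rewrite -(det_conj A P dG) -/Y [(Y *m P)^T]trmx_mul hPt -!mulmxA [P *m (P *m _)]mulmxA hPP.
  by rewrite !mulmxA.
set X := Y *m P in detAP.
have [G2 [e [dG2 hZ he]]] := GS X.
have detX : \det (X *m X^T) = \prod_i e 0 i.
  by rewrite -det_diag -hZ; have := det_conj X 1%:M dG2; rewrite !mulmx1 => ->.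
set W := Y *m (1%:M - P).
have hQ : (1%:M - P)^T = 1%:M - P.
  apply/matrixP => i j; rewrite !mxE eq_sym; congr (_ - _); by rewrite -[in RHS]hPt mxE.
have hQQ : (1%:M - P) *m (1%:M - P) = 1%:M - P.
  by rewrite mulmxBl mul1mx mulmxBr mulmx1 hPP subrr subr0.
have hW : W *m W^T = Y *m Y^T - X *m X^T.
  rewrite /W /X !trmx_mul hQ hPt -!mulmxA [P *m (P *m _)]mulmxA hPP.
  by rewrite [(1%:M - P) *m ((1%:M - P) *m _)]mulmxA hQQ mulmxBl mul1mx !mulmxBr.
have e_ge0 : forall i, 0 <= e 0 i.
  by move=> i; have := gram_ge0 (G2 *m X) i; rewrite hZ mxE eqxx mulr1n.
have XY : forall i, (X *m X^T) i i <= d 0 i.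
  move=> i; have := gram_ge0 W i; rewrite hW mxB_ij subr_ge0.
  by rewrite hY [diag_mx d i i]mxE eqxx mulr1n.
have ed : forall i, 0 <= e 0 i <= d 0 i.
  by move=> i; rewrite e_ge0 /=; apply: le_trans (he i) (XY i).
rewrite detAA detAP detX; split; first by apply: ler_prod => i _; apply: ed.
split.
  move=> heq; have E := prod_eq ed dpos heq.
  have W0 : W = 0.
    apply/row_matrixP => i; rewrite row0; apply: gram_eq0.
    rewrite hW mxB_ij; apply/eqP; rewrite subr_eq0 hY [diag_mx d i i]mxE eqxx mulr1n eq_le XY andbT.
    by rewrite -E he.
  have hYP : Y *m P = Y.
    by move: W0; rewrite /W mulmxBr mulmx1 => /subr0_eq/esym.
  by have := congr1 (mulmx (invmx G)) hYP; rewrite /Y !mulmxA mulVmx // !mul1mx.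
move=> hAP; rewrite -detX -detAP -detAA; by rewrite hAP.
Qed.


Lemma gram_pos p n (A : 'M[R]_(p, n)) : row_free A -> 0 < \det (A *m A^T).
Proof.
move=> hA; have [G [d [dG hY _]]] := GS A.
have Gu := unit_of_det1 dG.
have hYf : row_free (G *m A).
  by rewrite /row_free mxrankMfree // -/(row_free G) row_free_unit.
have -> : \det (A *m A^T) = \prod_i d 0 i.
  by rewrite -det_diag -hY; have := det_conj A 1%:M dG; rewrite !mulmx1 => ->.
by apply: prodr_gt0 => i _; have := free_diag_pos i hYf; rewrite hY mxE eqxx mulr1n.
Qed.

End S.

Theorem theorem1p1 (R : realFieldType) (n p q : nat)
    (A : 'M[R]_(p, n)) (B : 'M[R]_(q, n))
    (hpq : (p <= q)%N) (hqn : (q <= n)%N)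
    (hA : row_free A) (hB : row_free B)
    (hON : (p < q)%N -> inner_mx B B = 1%:M) :
  let M := inner_mx A B in
  \det (M *m M^T) <= gram_det A * gram_det B /\
  (\det (M *m M^T) = gram_det A * gram_det B <-> (A <= B)%MS).
Proof.
move=> M.
have hM : M = A *m B^T by rewrite /M inner_mxE.
rewrite /gram_det !inner_mxE hM.
have g2 := gram_pos hB.
have BU : B *m B^T \in unitmx by rewrite unitmxE unitfE; exact: lt0r_neq0 g2.
set P := B^T *m invmx (B *m B^T) *m B.
have hPt : P^T = P.
  by rewrite /P !trmx_mul trmxK trmx_inv trmx_mul trmxK mulmxA.
have hPP : P *m P = P.
  rewrite /P !mulmxA -[B^T *m invmx (B *m B^T) *m B *m B^T]mulmxA.
  by rewrite -[B^T *m invmx (B *m B^T) *m (B *m B^T)]mulmxA mulVmx // mulmx1.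
have hkey : \det (A *m B^T *m (A *m B^T)^T) =
            \det (A *m P *m A^T) * \det (B *m B^T).
  have [hlt|heq] : (p < q)%N \/ p = q.
    by move: hpq; rewrite leq_eqVlt => /orP [/eqP ->|->]; [right|left].
    have hBB := hON hlt; rewrite inner_mxE in hBB.
    rewrite /P hBB invmx1 det1 mulr1 mulmx1 trmx_mul !mulmxA.
    by rewrite trmxK.
  subst q.
  rewrite /P !mulmxA -[A *m B^T *m invmx (B *m B^T) *m B *m A^T]mulmxA.
  rewrite [(A *m B^T)^T]trmx_mul trmxK.
  have g0 := lt0r_neq0 g2.
  move: g0; set g := \det (B *m B^T) => g0.
  rewrite !det_mulmx det_inv -/g.
  by field.
rewrite hkey.
have [hle heq] := det_proj hPt hPP hA.
split; first by rewrite ler_pM2r.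
split => [h|h].
  have /heq hAP : \det (A *m P *m A^T) = \det (A *m A^T).
    exact: (mulIf (lt0r_neq0 g2) h).
  by rewrite -hAP /P !mulmxA submxMl.
congr (_ * _); apply/heq.
case/submxP: h => D ->.
rewrite /P !mulmxA -(mulmxA D B) -(mulmxA D) mulmxV // mulmx1.
by [].
Qed.
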